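(* Let $X$ be an $n$-dimensional real normed space and let $Y \subseteq X$ be a $k$-dimensional subspace, where $1 \leq k \leq n-1$. Then there exists $C>0$ (depending on $Y$) such that for every $k$-dimensional subspace $Y_0 \subseteq X$ we have $\lambda(Y_0, X) \leq \lambda(Y, X) + C\,d(Y, Y_0)$.
   Context: For a subspace $V\subseteq X$, $\lambda(V,X)$ is the infimum of the operator norms of linear projections $P:X\to V$ ($P|_V=\mathrm{id}_V$). For two $k$-dimensional subspaces $Y,Z$, $d(Y,Z)$ is the Hausdorff distance (with respect to the norm of $X$) between the unit spheres of $Y$ and $Z$. *)

(* Defs.v *)
From HB Require Import structures.
From mathcomp Require Import all_boot all_order all_algebra.
From mathcomp Require Import classical_sets reals.
Set Implicit Arguments. Unset Strict Implicit. Unset Printing Implicit Defensive.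
Import Order.TTheory GRing.Theory Num.Theory.
Local Open Scope ring_scope.
Local Open Scope classical_set_scope.

(* An n-dimensional real normed space is modelled (up to isometry) as
   'rV[R]_n equipped with an arbitrary norm N. *)
Definition is_norm (R : realType) (n : nat) (N : 'rV[R]_n -> R) : Prop :=
  [/\ forall x y, N (x + y) <= N x + N y,
      forall (a : R) x, N (a *: x) = `|a| * N x
    & forall x, N x = 0 -> x = 0].

(* Subspaces are row spaces (mxalgebra) of square matrices; a linear map
   X -> X is a matrix P acting by v |-> v *m P. *)

Definition opnorm (R : realType) (n : nat) (N : 'rV[R]_n -> R) (P : 'M[R]_n) : R :=
  sup [set N (v *m P) | v in [set v : 'rV[R]_n | N v <= 1]].

Definition is_projection (R : realType) (n : nat) (V P : 'M[R]_n) : Prop :=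
  (P <= V)%MS /\ (forall v : 'rV[R]_n, (v <= V)%MS -> v *m P = v).

Definition proj_const (R : realType) (n : nat) (N : 'rV[R]_n -> R) (V : 'M[R]_n) : R :=
  inf [set opnorm N P | P in [set P | is_projection V P]].

Definition unit_sphere (R : realType) (n : nat) (N : 'rV[R]_n -> R) (V : 'M[R]_n)
  : set 'rV[R]_n := [set v | (v <= V)%MS /\ N v = 1].

Definition sphere_dist (R : realType) (n : nat) (N : 'rV[R]_n -> R) (Y Z : 'M[R]_n) : R :=
  Num.max
    (sup [set inf [set N (y - z) | z in unit_sphere N Z] | y in unit_sphere N Y])
    (sup [set inf [set N (y - z) | y in unit_sphere N Y] | z in unit_sphere N Z]).

(* Main.v *)
Require Import Defs.
From HB Require Import structures.
From mathcomp Require Import all_boot all_order all_algebra.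
From mathcomp Require Import classical_sets reals.
From mathcomp Require Import all_classical all_reals all_analysis.
From mathcomp Require Import ring lra.
Set Implicit Arguments. Unset Strict Implicit. Unset Printing Implicit Defensive.
Import Order.TTheory GRing.Theory Num.Theory.
Import numFieldNormedType.Exports.
Local Open Scope ring_scope.
Local Open Scope classical_set_scope.

Section NormFacts.
Variables (R : realType) (n : nat) (N : 'rV[R]_n -> R).
Hypothesis hN : is_norm N.

Lemma N_tri x y : N (x + y) <= N x + N y.
Proof. by case: hN => h1 h2 h3; auto. Qed.
Lemma N_scale (a : R) x : N (a *: x) = `|a| * N x.
Proof. by case: hN => h1 h2 h3; auto. Qed.
Lemma N_eq0 x : N x = 0 -> x = 0.
Proof. by case: hN => h1 h2 h3; auto. Qed.
Lemma N0 : N 0 = 0.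
Proof. by rewrite -(scale0r (0 : 'rV[R]_n)) N_scale normr0 mul0r. Qed.
Lemma NN x : N (- x) = N x.
Proof. by rewrite -scaleN1r N_scale normrN normr1 mul1r. Qed.
Lemma N_ge0 x : 0 <= N x.
Proof.
have := N_tri x (- x); rewrite subrr N0 NN.
by rewrite -mulr2n pmulrn_lge0.
Qed.
Lemma N_sub x y : N x - N y <= N (x - y).
Proof. by rewrite lerBlDr; apply: le_trans (N_tri _ _); rewrite subrK. Qed.
Lemma N_dist x y : `|N x - N y| <= N (x - y).
Proof.
rewrite ler_norml N_sub andbT lerNl opprB.
by apply: le_trans (N_sub _ _) _; rewrite -opprB NN.
Qed.

Lemma N_sum (I : Type) (r : seq I) (F : I -> 'rV[R]_n) :
  N (\sum_(i <- r) F i) <= \sum_(i <- r) N (F i).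
Proof.
elim: r => [|a r IH]; first by rewrite !big_nil N0.
rewrite !big_cons; apply: le_trans (N_tri _ _) _; exact: lerD.
Qed.

Definition c2 := \sum_(j < n) N (delta_mx 0 j).

Lemma c2_ge0 : 0 <= c2.
Proof. by apply: sumr_ge0 => j _; exact: N_ge0. Qed.

Lemma row_sum_delta (v : 'rV[R]_n) : v = \sum_(j < n) v 0 j *: delta_mx 0 j.
Proof.
apply/rowP => j; rewrite summxE (bigD1 j) //= big1 ?addr0.
  by rewrite !mxE !eqxx mulr1.
by move=> i ij; rewrite !mxE eqxx /= eq_sym (negbTE ij) mulr0.
Qed.

Lemma N_upper_sum v : N v <= \sum_(j < n) `|v 0 j| * N (delta_mx 0 j).
Proof.
rewrite {1}(row_sum_delta v). apply: le_trans (N_sum _ _) _.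
by apply: ler_sum => j _; rewrite N_scale.
Qed.

Lemma entry_le_mxnorm (v : 'rV[R]_n) j : `|v 0 j| <= `|v|.
Proof.
rewrite [leRHS]/Num.norm /= mx_normrE; apply/bigmax_geP; right => /=.
by exists (0, j).
Qed.

Lemma N_upper v : N v <= c2 * `|v|.
Proof.
apply: le_trans (N_upper_sum v) _; rewrite /c2 mulr_suml.
apply: ler_sum => j _; rewrite mulrC; apply: ler_wpM2l; first exact: N_ge0.
exact: entry_le_mxnorm.
Qed.

Lemma N_continuous : continuous N.
Proof.
move=> x; apply/(@cvgrPdist_lt _ _ _ (nbhs x) (@nbhs_filter _ x)) => e e0.
have c0 : 0 < c2 + 1 by rewrite ltr_wpDl // c2_ge0.
near=> t.
apply: (le_lt_trans (N_dist _ _)); apply: (le_lt_trans (N_upper _)).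
apply: (le_lt_trans (ler_wpM2r (normr_ge0 _) (_ : c2 <= c2 + 1))).
  by rewrite lerDl.
rewrite mulrC -ltr_pdivlMr //.
  near: t.
  have ep : 0 < e / (c2 + 1) by rewrite divr_gt0.
  apply: filterS (near_ball x _ ep) => t.
  by rewrite -ball_normE.
Unshelve. all: by end_near. Qed.

End NormFacts.

Lemma N_lower (R : realType) (n : nat) (N : 'rV[R]_n -> R) : is_norm N ->
   exists2 c0 : R, 0 < c0 & forall v, c0 * `|v| <= N v.
Proof.
case: n N => [|m] N' hN'.
  exists 1 => // v; rewrite (thinmx0 v) normr0 mulr0; exact: N_ge0.
pose A := [set v : 'rV[R]_m.+1 | `|v| = 1].
have A0 : A !=set0.
  pose v0 : 'rV[R]_m.+1 := const_mx 1.
  have v0n : v0 != 0.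
    by apply/negP => /eqP/rowP/(_ ord0); rewrite !mxE => /eqP; rewrite oner_eq0.
  exists (`|v0|^-1 *: v0); rewrite /A /= normrZ normrV ?unitfE ?normr_eq0 //.
  by rewrite normr_id mulVf // normr_eq0.
have cA : compact A.
  have bA : \forall M \near +oo, globally A [set x : 'rV[R]_m.+1 | `|x| <= M].
    near=> M => v /= Av; rewrite Av.
    near: M; apply: nbhs_pinfty_ge; exact: num_real.
  apply: bounded_closed_compact; first exact: bA.
  apply: (@preimage_closed _ _ (@Num.norm _ 'rV[R]_m.+1) [set 1]).
    by move=> x _; exact: norm_continuous.
  exact: closed_eq.
have cN : {within A, continuous N'}.
  by apply: continuous_subspaceT => x; exact: N_continuous.
have [c cA' cmin] := compact_EVT_min A0 cA cN.
have c1 : `|c| = 1 by move: cA'; rewrite inE.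
exists (N' c).
  rewrite lt_def N_ge0 // andbT; apply/eqP => /(N_eq0 hN') c0.
  by move: c1; rewrite c0 normr0 => /eqP; rewrite eq_sym oner_eq0.
move=> v; have [->|v0] := eqVneq v 0; first by rewrite normr0 mulr0 N0.
have vA : (`|v|^-1 *: v) \in A.
  rewrite inE /A /= normrZ normrV ?unitfE ?normr_eq0 //.
  by rewrite normr_id mulVf // normr_eq0.
have := cmin _ vA; rewrite N_scale // normrV ?unitfE ?normr_eq0 // normr_id.
by rewrite mulrC -ler_pdivlMr ?normr_gt0 // invrK mulrC.
Unshelve. all: by end_near. Qed.


Section Part2.
Variables (R : realType) (n : nat) (N : 'rV[R]_n -> R).
Hypothesis hN : is_norm N.

Lemma coord_bound m (F : 'M[R]_(n, m)) (a : 'I_m -> R) :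
  (forall j, 0 <= a j) ->
  exists2 K, 0 <= K & forall w, \sum_j `|(w *m F) 0 j| * a j <= K * N w.
Proof.
move=> a0; have [c0 c0p c0N] := N_lower hN.
pose K' := \sum_j (\sum_i `|F i j|) * a j.
have K'0 : 0 <= K'.
  by apply: sumr_ge0 => j _; apply: mulr_ge0 => //; apply: sumr_ge0.
exists (K' / c0); first by rewrite divr_ge0 // ltW.
move=> w.
have wle : `|w| <= N w / c0 by rewrite ler_pdivlMr // mulrC.
apply: (@le_trans _ _ (`|w| * K')); last first.
  apply: (@le_trans _ _ (N w / c0 * K')); first by apply: ler_wpM2r.
  by rewrite le_eqVlt; apply/orP; left; apply/eqP; ring.
rewrite /K' mulr_sumr; apply: ler_sum => j _; rewrite mulrA.
apply: ler_wpM2r => //; rewrite mxE mulr_sumr.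
apply: le_trans (ler_norm_sum _ _ _) _; apply: ler_sum => i _.
rewrite normrM; apply: ler_wpM2r => //.
exact: entry_le_mxnorm.
Qed.

Lemma bound_mul (M : 'M[R]_n) :
  exists2 K, 0 <= K & forall w, N (w *m M) <= K * N w.
Proof.
have [K K0 HK] := coord_bound M (fun j => N_ge0 hN (delta_mx 0 j)).
exists K => // w; apply: le_trans (N_upper_sum hN _) (HK w).
Qed.

Lemma opnorm_le (P : 'M[R]_n) K : 0 <= K ->
  (forall v, N (v *m P) <= K * N v) -> opnorm N P <= K.
Proof.
move=> K0 HK; apply: ge_sup.
  by exists (N (0 *m P)), 0 => //=; rewrite (N0 hN).
move=> _ [v /= Nv <-]; apply: le_trans (HK v) _.
by rewrite -[leRHS]mulr1 ler_wpM2l.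
Qed.

Lemma opnorm_ge0 (P : 'M[R]_n) : 0 <= opnorm N P.
Proof.
have [K K0 HK] := bound_mul P.
have : 0 <= N (0 *m P) by apply: N_ge0.
move/le_trans; apply; apply: ub_le_sup.
  exists K => _ [v /= Nv <-]; apply: le_trans (HK v) _.
  by rewrite -[leRHS]mulr1 ler_wpM2l.
by exists 0 => //=; rewrite (N0 hN).
Qed.

Lemma opnorm_bound (P : 'M[R]_n) v : N (v *m P) <= opnorm N P * N v.
Proof.
have [K K0 HK] := bound_mul P.
have ub : has_ubound [set N (v *m P) | v in [set v : 'rV[R]_n | N v <= 1]].
  exists K => _ [u /= Nu <-]; apply: le_trans (HK u) _.
  by rewrite -[leRHS]mulr1 ler_wpM2l.
have [->|v0] := eqVneq v 0; first by rewrite mul0mx (N0 hN) mulr0.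
have Nv0 : 0 < N v.
  by rewrite lt_def N_ge0 // andbT; apply/eqP => /(N_eq0 hN); apply/eqP.
have Ni : 0 <= (N v)^-1 by rewrite invr_ge0 ltW.
have H : N ((N v)^-1 *: v *m P) <= opnorm N P.
  apply: (ub_le_sup ub).
  exists ((N v)^-1 *: v) => //=.
  by rewrite N_scale // ger0_norm // mulVf // gt_eqF.
move: H; rewrite -scalemxAl N_scale // ger0_norm //.
by move=> H; rewrite -ler_pdivrMr // mulrC.
Qed.

Lemma proj_le (V P : 'M[R]_n) : is_projection V P -> proj_const N V <= opnorm N P.
Proof.
move=> hP; apply: ge_inf; last by exists P.
by exists 0 => _ [Q _ <-]; exact: opnorm_ge0.
Qed.

Lemma proj_ge0 (V : 'M[R]_n) (P : 'M[R]_n) : is_projection V P -> 0 <= proj_const N V.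
Proof.
move=> hP; apply: lb_le_inf; first by exists (opnorm N P), P.
by move=> _ [Q _ <-]; exact: opnorm_ge0.
Qed.

Lemma proj_approx (V P : 'M[R]_n) eps : is_projection V P -> 0 < eps ->
  exists2 Q, is_projection V Q & opnorm N Q < proj_const N V + eps.
Proof.
move=> hP e0.
have hi : has_inf [set opnorm N P0 | P0 in [set P0 | is_projection V P0]].
  split; first by exists (opnorm N P), P.
  by exists 0 => _ [Q _ <-]; exact: opnorm_ge0.
have [_ [Q hQ <-] lt] := inf_adherent e0 hi.
by exists Q.
Qed.

End Part2.

Lemma unit_of_ker (R : fieldType) m (A : 'M[R]_m) :
  (forall r : 'rV_m, r *m A = 0 -> r = 0) -> A \in unitmx.
Proof.
move=> H; rewrite -row_free_unit -kermx_eq0; apply/eqP/row_matrixP => i.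
by rewrite row0; apply: H; rewrite -row_mul mulmx_ker row0.
Qed.

Section Part3.
Variables (R : realType).

Definition sq n (x : 'rV[R]_n) := (x *m x^T) 0 0.

Lemma sqE n (x : 'rV[R]_n) : sq x = \sum_j x 0 j ^+ 2.
Proof. by rewrite /sq mxE; apply: eq_bigr => j _; rewrite mxE expr2. Qed.

Lemma sq_ge0 n (x : 'rV[R]_n) : 0 <= sq x.
Proof. by rewrite sqE; apply: sumr_ge0 => j _; exact: sqr_ge0. Qed.

Lemma sq_eq0 n (x : 'rV[R]_n) : sq x = 0 -> x = 0.
Proof.
rewrite sqE => /eqP; rewrite psumr_eq0 => [/allP H|j _]; last exact: sqr_ge0.
apply/rowP => j; rewrite mxE; apply/eqP; rewrite -sqrf_eq0.
by apply: (H j); rewrite mem_index_enum.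
Qed.

Lemma sq_entry n (x : 'rV[R]_n) j : x 0 j ^+ 2 <= sq x.
Proof.
rewrite sqE (bigD1 j) //= lerDl; apply: sumr_ge0 => i _; exact: sqr_ge0.
Qed.

Lemma orth_proj n (V : 'M[R]_n) :
  exists Q : 'M[R]_n, [/\ is_projection V Q, Q^T = Q & Q *m Q = Q].
Proof.
move: (row_base_free V) (eq_row_base V); move: (row_base V) => B Bfree BV.
pose G := B *m B^T.
have Gu : G \in unitmx.
  apply: unit_of_ker => r rG.
  have : sq (r *m B) = 0.
    by rewrite /sq trmx_mul mulmxA -(mulmxA r) -/G rG mul0mx mxE.
  move/sq_eq0/eqP; rewrite mulmx_free_eq0 //; exact/eqP.
have GT : G^T = G by rewrite /G trmx_mul trmxK.
pose Q := B^T *m invmx G *m B.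
exists Q; split.
- split; first by rewrite /Q -BV submxMl.
  move=> v; rewrite -BV => /submxP [u ->].
  by rewrite /Q !mulmxA -(mulmxA u B) -/G mulmxK.
- by rewrite /Q !trmx_mul trmxK trmx_inv GT mulmxA.
- rewrite /Q !mulmxA -(mulmxA _ B) -/G.
  by rewrite mulmxK.
Qed.

Lemma sym_idem_sq n (Q : 'M[R]_n) (v : 'rV[R]_n) :
  Q^T = Q -> Q *m Q = Q -> sq (v *m Q) <= sq v.
Proof.
move=> QT QQ.
have e1 : (v *m Q) *m (v *m Q)^T = v *m Q *m v^T.
  by rewrite trmx_mul QT !mulmxA -(mulmxA v) QQ.
have e2 : (v - v *m Q) *m (v - v *m Q)^T = v *m v^T - v *m Q *m v^T.
  rewrite linearB /= mulmxBl !mulmxBr e1 trmx_mul QT mulmxA.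
  by rewrite subrr subr0.
have : sq v = sq (v *m Q) + sq (v - v *m Q).
  have mB (A B : 'M[R]_1) : (A - B) 0 0 = A 0 0 - B 0 0 by rewrite !mxE.
  by rewrite /sq e1 e2 mB addrC subrK.
by move=> ->; rewrite lerDl sq_ge0.
Qed.

Lemma sq_le_norm n (v : 'rV[R]_n) : sq v <= n%:R * `|v| ^+ 2.
Proof.
rewrite sqE; apply: le_trans (_ : \sum_(j < n) `|v| ^+ 2 <= _).
  apply: ler_sum => j _; rewrite -real_normK ?num_real //.
  rewrite ler_sqr ?nnegrE //; exact: entry_le_mxnorm.
by rewrite sumr_const card_ord mulr_natl.
Qed.

Lemma uniform_bound n (N : 'rV[R]_n -> R) : is_norm N ->
  exists2 K, 0 <= K & forall Q : 'M[R]_n, Q^T = Q -> Q *m Q = Q ->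
    forall v, N (v *m Q) <= K * N v.
Proof.
move=> hN; have [c0 c0p c0N] := N_lower hN.
exists (n%:R * c2 N / c0).
  by apply: divr_ge0; [apply: mulr_ge0 => //; exact: c2_ge0 | exact: ltW].
move=> Q QT QQ v.
have ent j : `|(v *m Q) 0 j| <= n%:R * `|v|.
  rewrite -ler_sqr ?nnegrE ?mulr_ge0 //.
  rewrite real_normK ?num_real //.
  apply: le_trans (sq_entry _ _) _; apply: le_trans (sym_idem_sq _ QT QQ) _.
  apply: le_trans (sq_le_norm _) _.
  rewrite exprMn ler_wpM2r ?sqr_ge0 //.
  case: n {N hN c0N Q QT QQ v j} => [|m]; first by rewrite expr2 mul0r.
  by rewrite expr2 ler_peMl // ler1n.
apply: le_trans (N_upper_sum hN _) _.
apply: le_trans (_ : \sum_(j < n) n%:R * `|v| * N (delta_mx 0 j) <= _).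
  by apply: ler_sum => j _; apply: ler_wpM2r => //; exact: N_ge0.
rewrite -mulr_sumr -/(c2 N).
have vle : `|v| <= N v / c0 by rewrite ler_pdivlMr // mulrC.
have c20 := c2_ge0 hN.
apply: (@le_trans _ _ (n%:R * (N v / c0) * c2 N)).
  by apply: ler_wpM2r => //; apply: ler_wpM2l.
by rewrite le_eqVlt; apply/orP; left; apply/eqP; ring.
Qed.

End Part3.

Section Part4.
Variables (R : realType) (n : nat) (N : 'rV[R]_n -> R).
Hypothesis hN : is_norm N.

Lemma Npos v : v != 0 -> 0 < N v.
Proof. by move=> v0; rewrite lt_def N_ge0 // andbT; apply/eqP => /(N_eq0 hN); apply/eqP. Qed.

Lemma normalize v : v != 0 -> N ((N v)^-1 *: v) = 1.
Proof.
move=> v0; have := Npos v0 => p.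
by rewrite N_scale // ger0_norm ?invr_ge0 ?(ltW p) // mulVf // gt_eqF.
Qed.

Lemma sphere_nonempty (V : 'M[R]_n) : (0 < \rank V)%N -> exists z, unit_sphere N V z.
Proof.
move=> rk.
have [i ri] : exists i, row i V != 0.
  apply/existsP; apply: contraTT rk => /existsPn H.
  have -> : V = 0 by apply/row_matrixP => i; rewrite row0; apply/eqP/negPn/H.
  by rewrite mxrank0.
exists ((N (row i V))^-1 *: row i V); split; last exact: normalize.
by rewrite scalemx_sub // row_sub.
Qed.


Lemma sd_facts (Y Y0 : 'M[R]_n) :
  (exists z, unit_sphere N Y0 z) ->
  forall u, unit_sphere N Y u ->
  0 <= inf [set N (u - z) | z in unit_sphere N Y0] /\
  inf [set N (u - z) | z in unit_sphere N Y0] <= sphere_dist N Y Y0 /\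
  has_inf [set N (u - z) | z in unit_sphere N Y0].
Proof.
move=> [z0 hz0] u hu.
have hinf u' : has_inf [set N (u' - z) | z in unit_sphere N Y0].
  split; first by exists (N (u' - z0)), z0.
  by exists 0 => _ [z _ <-]; exact: N_ge0.
split; [|split => //].
  apply: lb_le_inf; first by exists (N (u - z0)), z0.
  by move=> _ [z _ <-]; exact: N_ge0.
apply: le_trans (_ : sup [set inf [set N (y - z) | z in unit_sphere N Y0] | y in unit_sphere N Y] <= _); last first.
  by rewrite /sphere_dist le_max lexx.
apply: ub_le_sup; last by exists u.
exists 2 => _ [y hy <-].
apply: le_trans (ge_inf (hinf y).2 (_ : _ (N (y - z0))) ) _.
  by exists z0.
apply: le_trans (N_tri hN _ _) _; by rewrite NN // hy.2 hz0.2.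
Qed.


Lemma dist_ge0 (Y Y0 : 'M[R]_n) :
  (exists u, unit_sphere N Y u) -> (exists z, unit_sphere N Y0 z) ->
  0 <= sphere_dist N Y Y0.
Proof.
move=> [u hu] h0; have [H1 [H2 _]] := sd_facts h0 hu; exact: le_trans H1 H2.
Qed.

Lemma approx (Y Y0 : 'M[R]_n) y eta :
  (exists z, unit_sphere N Y0 z) -> (y <= Y)%MS -> 0 < eta ->
  exists z, (z <= Y0)%MS /\ N (y - z) <= (sphere_dist N Y Y0 + eta) * N y.
Proof.
move=> h0 yY e0.
have [->|y0] := eqVneq y 0.
  by exists 0; rewrite sub0mx subr0 (N0 hN) mulr0.
have p := Npos y0.
pose u := (N y)^-1 *: y.
have hu : unit_sphere N Y u by split; [rewrite scalemx_sub | exact: normalize].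
have [H1 [H2 H3]] := sd_facts h0 hu.
have [_ [z hz <-] lt] := inf_adherent e0 H3.
exists (N y *: z); split; first by rewrite scalemx_sub //; case: hz.
have -> : y - N y *: z = N y *: (u - z).
  by rewrite scalerBr /u scalerA mulfV ?gt_eqF // scale1r.
rewrite N_scale // ger0_norm ?(ltW p) // mulrC ler_wpM2r ?(ltW p) //.
by apply: ltW; apply: lt_le_trans lt _; rewrite lerD2r.
Qed.

End Part4.

Section Part5.
Variables (R : realType) (n : nat) (N : 'rV[R]_n -> R).
Hypothesis hN : is_norm N.

Lemma small_case (Y Y0 P : 'M[R]_n) (M1 L eta : R) :
  0 <= M1 ->
  (forall w, \sum_i `|(w *m pinvmx Y) 0 i| * N (row i Y) <= M1 * N w) ->
  \rank Y0 = \rank Y ->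
  (exists z, unit_sphere N Y0 z) ->
  is_projection Y P -> opnorm N P <= L ->
  0 < eta -> 0 <= sphere_dist N Y Y0 ->
  M1 * (sphere_dist N Y Y0 + eta) <= 1/2 ->
  proj_const N Y0 <= (1 + 4 * (M1 * (sphere_dist N Y Y0 + eta))) * L.
Proof.
set d := sphere_dist N Y Y0.
move=> M10 hM1 rk h0 hP PL e0 d0 he.
set e := M1 * (d + eta) in he *.
have e0' : 0 <= e by rewrite mulr_ge0 // addr_ge0 // ltW.
have /fin_all_exists [f hf] : forall i : 'I_n, exists z,
    (z <= Y0)%MS /\ N (row i Y - z) <= (d + eta) * N (row i Y).
  by move=> i; apply: approx => //; exact: row_sub.
pose Z : 'M[R]_n := \matrix_(i, j) f i 0 j.
have rowZ i : row i Z = f i by apply/rowP => j; rewrite !mxE.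
have ZY0 : (Z <= Y0)%MS.
  by apply/row_subP => i; rewrite rowZ; case: (hf i).
pose E := pinvmx Y *m (Z - Y).
pose S := 1%:M + E.
have NE w : N (w *m E) <= e * N w.
  rewrite /E mulmxA mulmx_sum_row.
  apply: le_trans (N_sum hN _ _) _.
  apply: (@le_trans _ _ (\sum_i `|(w *m pinvmx Y) 0 i| * ((d + eta) * N (row i Y)))).
    apply: ler_sum => i _; rewrite N_scale //; apply: ler_wpM2l => //.
    have -> : row i (Z - Y) = - (row i Y - f i) by apply/rowP => j; rewrite !mxE opprB.
    by rewrite NN //; case: (hf i).
  apply: (@le_trans _ _ ((d + eta) * (M1 * N w))).
    have -> : \sum_i `|(w *m pinvmx Y) 0 i| * ((d + eta) * N (row i Y)) =
       (d + eta) * \sum_i `|(w *m pinvmx Y) 0 i| * N (row i Y).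
      by rewrite mulr_sumr; apply: eq_bigr => i _; rewrite mulrCA.
    by apply: ler_wpM2l; [rewrite addr_ge0 // ltW | exact: hM1].
  by rewrite /e mulrA [(d + eta) * M1]mulrC.
have wS w : w *m S = w + w *m E by rewrite mulmxDr mulmx1.
have NSup w : N (w *m S) <= (1 + e) * N w.
  rewrite wS mulrDl mul1r; apply: le_trans (N_tri hN _ _) _.
  by rewrite lerD2l.
have NSlo w : (1 - e) * N w <= N (w *m S).
  rewrite mulrBl mul1r lerBlDr.
  apply: (@le_trans _ _ (N (w *m S) + N (w *m E))); last by rewrite lerD2l.
  rewrite -[X in N X <= _](addrK (w *m E) w) -wS.
  by apply: le_trans (N_tri hN _ _) _; rewrite NN.
have e1 : 0 < 1 - e by rewrite subr_gt0; apply: le_lt_trans he _; lra.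
have Su : S \in unitmx.
  apply: unit_of_ker => r rS.
  have := NSlo r; rewrite rS (N0 hN) => H.
  apply: (N_eq0 hN); apply/eqP; rewrite eq_le N_ge0 // andbT.
  by rewrite -(pmulr_rle0 _ e1).
pose Si := invmx S.
have YS : (Y *m S <= Y0)%MS.
  have -> : Y *m S = Y *m pinvmx Y *m Z.
    rewrite wS /E mulmxA mulmxBr (mulmxKpV (submx_refl Y)).
    by rewrite addrC subrK.
  exact: submx_trans (submxMl _ _) ZY0.
have Y0YS : (Y0 <= Y *m S)%MS.
  rewrite -(mxrank_leqif_sup YS).2 mxrankMfree ?rk //.
  by rewrite row_free_unit.
pose Q := Si *m P *m S.
have hQ : is_projection Y0 Q.
  split.
    apply: submx_trans YS; apply: submxMr.
    exact: submx_trans (submxMl _ _) hP.1.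
  move=> v vY0.
  have vSi : (v *m Si <= Y)%MS.
    have := submxMr Si (submx_trans vY0 Y0YS).
    by rewrite mulmxK.
  by rewrite /Q !mulmxA hP.2 // mulmxKV.
have L0 : 0 <= L by apply: le_trans (opnorm_ge0 hN P) PL.
apply: le_trans (proj_le hN hQ) _.
apply: (@le_trans _ _ ((1 + e) * L / (1 - e))).
  apply: opnorm_le => //.
    by rewrite divr_ge0 ?mulr_ge0 // ?ltW //; lra.
  move=> v.
  have hSi : N (v *m Si) <= N v / (1 - e).
    rewrite ler_pdivlMr // mulrC.
    by apply: le_trans (NSlo _) _; rewrite mulmxKV.
  rewrite /Q !mulmxA; apply: le_trans (NSup _) _.
  apply: (@le_trans _ _ ((1 + e) * (L * N (v *m Si)))).
    apply: ler_wpM2l; first lra.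
    apply: le_trans (opnorm_bound hN _ _) _.
    by apply: ler_wpM2r => //; exact: N_ge0.
  apply: (@le_trans _ _ ((1 + e) * (L * (N v / (1 - e))))).
    by apply: ler_wpM2l; [lra | apply: ler_wpM2l].
  by rewrite le_eqVlt; apply/orP; left; apply/eqP; field; lra.
rewrite ler_pdivrMr //.
have h1 : (1 + e) <= (1 + 4 * e) * (1 - e) by nra.
by rewrite mulrAC; apply: ler_wpM2r.
Qed.
End Part5.

Unset Implicit Arguments.

Theorem mainTheorem15 (R : realType) (n k : nat) (N : 'rV[R]_n -> R)
    (Y : 'M[R]_n) :
  is_norm N -> (1 <= k)%N -> (k <= n - 1)%N -> \rank Y = k ->
  exists C : R, 0 < C /\
    forall Y0 : 'M[R]_n, \rank Y0 = k ->
      proj_const N Y0 <= proj_const N Y + C * sphere_dist N Y Y0.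
Proof.
move=> hN k1 _ rkY.
have [M1 M10 hM1] := coord_bound hN (pinvmx Y) (fun i => N_ge0 hN (row i Y)).
have [Ku Ku0 hKu] := uniform_bound hN.
have [P0 [hP0 _ _]] := orth_proj Y.
set lam := proj_const N Y.
have lam0 : 0 <= lam := proj_ge0 hN hP0.
pose M0 := M1 + 1.
have M0p : 0 < M0 by rewrite /M0; lra.
exists (4 * M0 * (lam + 1) + 4 * M0 * Ku + 1); split.
  have : 0 <= M0 * (lam + 1) by rewrite mulr_ge0 //; lra.
  have : 0 <= M0 * Ku by rewrite mulr_ge0 //; lra.
  lra.
move=> Y0 rk0.
have h0 : exists z, unit_sphere N Y0 z by apply: sphere_nonempty; rewrite ?rk0.
have hY : exists z, unit_sphere N Y z by apply: sphere_nonempty; rewrite ?rkY.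
set d := sphere_dist N Y Y0.
have d0 : 0 <= d := dist_ge0 hN hY h0.
case: (leP (1 / (4 * M0)) d) => hd.
  have [Q [hQ QT QQ]] := orth_proj Y0.
  apply: le_trans (proj_le hN hQ) _.
  apply: le_trans (opnorm_le hN Ku0 (hKu Q QT QQ)) _.
  have hd' : 1 <= 4 * M0 * d.
    by move: hd; rewrite ler_pdivrMr ?mulr_gt0 // mulrC.
  have : Ku <= 4 * M0 * d * Ku by rewrite ler_peMl.
  have : 0 <= M0 * (lam + 1) * d by rewrite !mulr_ge0 //; lra.
  nra.
have hd' : 4 * M0 * d < 1.
  by move: hd; rewrite ltr_pdivlMr ?mulr_gt0 // mulrC.
apply/ler_addgt0Pr => t t0.
pose t' := t / (t + 1).
have t'0 : 0 < t' by rewrite divr_gt0 //; lra.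
have t't : t' <= t by rewrite /t' ler_pdivrMr; [nra | lra].
have t'1 : t' <= 1 by rewrite /t' ler_pdivrMr; lra.
pose eps := t' / 2.
have eps0 : 0 < eps by rewrite divr_gt0.
have epsE : eps * 2 = t' by rewrite /eps mulfVK //; lra.
pose eta1 := t' / (8 * M0 * (lam + 1)).
have den : 0 < 8 * M0 * (lam + 1) by rewrite !mulr_gt0 //; lra.
have eta10 : 0 < eta1 by rewrite divr_gt0.
have eta1E : M0 * eta1 * (lam + 1) = t' / 8.
  rewrite /eta1; move: lam0 M0p; move: (lam) (M0) => l m l0 m0; field; rewrite !gt_eqF //; lra.
have [P hP Plt] := proj_approx hN hP0 eps0.
have M0eta : M0 * eta1 <= t' / 8.
  rewrite -eta1E; rewrite ler_peMr //; [rewrite mulr_ge0 // ltW // | lra].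
have M1d : M1 * d <= M0 * d by rewrite ler_wpM2r //; rewrite /M0; lra.
have M1eta : M1 * eta1 <= M0 * eta1 by rewrite ler_wpM2r ?ltW //; rewrite /M0; lra.
have he : M1 * (d + eta1) <= 1 / 2 by rewrite mulrDr; lra.
have rk : \rank Y0 = \rank Y by rewrite rk0 rkY.
have := small_case hN M10 hM1 rk h0 hP (ltW Plt) eta10 d0 he.
move/le_trans; apply.
have F1 : M1 * d * (lam + eps) <= M0 * d * (lam + 1).
  apply: ler_pM; [rewrite mulr_ge0 // | lra | exact: M1d | lra].
have F2 : M1 * eta1 * (lam + eps) <= M0 * eta1 * (lam + 1).
  apply: ler_pM; [rewrite mulr_ge0 // ltW // | lra | exact: M1eta | lra].
have F3 : 0 <= M0 * Ku * d by rewrite !mulr_ge0 //; lra.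
rewrite -/lam -/d.
clearbody t' eps eta1 M0 lam d.
lra.
Qed.
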